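(* Let $\mathcal M,\mathcal M'$ be finite polyptych lattices over $F$ with index sets $I,I'$, and let $\mathrm{pr}:\mathcal M\times\mathcal M'\to\mathcal M$, $\mathrm{pr}':\mathcal M\times\mathcal M'\to\mathcal M'$ be the projections on sets of elements. Then $(p,p')\mapsto p\circ\mathrm{pr}+p'\circ\mathrm{pr}'$ is a bijection $\mathrm{Sp}(\mathcal M)\times\mathrm{Sp}(\mathcal M')\to\mathrm{Sp}(\mathcal M\times\mathcal M')$, and it maps $\mathrm{Sp}(\mathcal M,\alpha)\times\mathrm{Sp}(\mathcal M',\alpha')$ into $\mathrm{Sp}(\mathcal M\times\mathcal M',(\alpha,\alpha'))$ for all $\alpha\in I,\alpha'\in I'$.
   Context: Fix a subring $F$ with $\mathbb Z\subseteq F\subseteq\mathbb R$. A polyptych lattice of rank $r$ over $F$ is a collection $\{M_\alpha\}_{\alpha\in I}$ of free $F$-modules of rank $r$ with piecewise $F$-linear maps (continuous and $F$-linear on each cone of some complete $F$-rational fan) $\mu_{\alpha,\beta}:M_\alpha\to M_\beta$ with $\mu_{\alpha,\alpha}=\mathrm{id}$, $\mu_{\alpha,\beta}=\mu_{\beta,\alpha}^{-1}$, $\mu_{\beta,\gamma}\circ\mu_{\alpha,\beta}=\mu_{\alpha,\gamma}$; finite if $I$ is finite. Elements are classes of $\bigsqcup M_\alpha$ under $m_\alpha\sim\mu_{\alpha,\beta}(m_\alpha)$, $\pi_\alpha$ the chart maps, $m+_\alpha m':=\pi_\alpha^{-1}(\pi_\alpha(m)+\pi_\alpha(m'))$, $\lambda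 m:=\pi_\alpha^{-1}(\lambda\pi_\alpha(m))$ ($\lambda\ge 0$). A point is $p:\mathcal M\to F$ with $p(m)+p(m')=\min_\alpha p(m+_\alpha m')$ and $p(\lambda m)=\lambda p(m)$ ($\lambda\in F_{\ge0}$); $\mathrm{Sp}(\mathcal M)$ is the set of points and $\mathrm{Sp}(\mathcal M,\alpha)$ those $p$ with $p\circ\pi_\alpha^{-1}$ $F$-linear. The product polyptych lattice $\mathcal M\times\mathcal M'$ (rank $r+r'$) has charts $M_\alpha\times M'_{\alpha'}$ indexed by $(\alpha,\alpha')\in I\times I'$ and mutations $\mu_{\alpha,\beta}\times\mu'_{\alpha',\beta'}$; its elements are pairs $(m,m')$. *)

(* Defs.v *)
From HB Require Import structures.
From mathcomp Require Import all_boot all_order all_algebra.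
From mathcomp Require Import reals.
Set Implicit Arguments. Unset Strict Implicit. Unset Printing Implicit Defensive.
Import Order.TTheory GRing.Theory Num.Theory.
Local Open Scope ring_scope.

Definition Fvec (R : realType) (F : {pred R}) (r : nat) (v : 'rV[R]_r) : Prop :=
  forall j, v 0 j \in F.

Definition dotv (R : realType) (r : nat) (u x : 'rV[R]_r) : R := (u *m x^T) 0 0.

Definition cone_of (R : realType) (r : nat) (gs : seq 'rV[R]_r) (x : 'rV[R]_r) : Prop :=
  exists c : 'I_(size gs) -> R,
    (forall i, 0 <= c i) /\ x = \sum_(i < size gs) c i *: gs`_i.

Definition is_face (R : realType) (r : nat) (S T : 'rV[R]_r -> Prop) : Prop :=
  exists u : 'rV[R]_r, (forall x, S x -> 0 <= dotv u x) /\
    (forall x, T x <-> (S x /\ dotv u x = 0)).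

Definition complete_Frational_fan (R : realType) (F : {pred R}) (r : nat)
    (Sigma : seq (seq 'rV[R]_r)) : Prop :=
  [/\ (forall s, s \in Sigma -> forall g, g \in s -> Fvec F g),
      (forall s, s \in Sigma -> forall x, cone_of s x -> cone_of s (- x) -> x = 0),
      (forall s, s \in Sigma -> forall T, is_face (cone_of s) T ->
          exists2 t, t \in Sigma & forall x, T x <-> cone_of t x),
      (forall s t, s \in Sigma -> t \in Sigma ->
          is_face (cone_of s) (fun x => cone_of s x /\ cone_of t x) /\
          is_face (cone_of t) (fun x => cone_of s x /\ cone_of t x))
    & (forall x, exists2 s, s \in Sigma & cone_of s x)].

(* a piecewise F-linear map F^r -> F^r (only its values on F^r matter):
   maps F^r into F^r, is continuous (for the topology of F^r inherited from
   R^r), and is F-linear on (the F-points of) each cone of some complete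
   F-rational fan *)
Definition piecewise_Flinear (R : realType) (F : {pred R}) (r : nat)
    (f : 'rV[R]_r -> 'rV[R]_r) : Prop :=
  [/\ (forall v, Fvec F v -> Fvec F (f v)),
      (forall v, Fvec F v -> forall eps : R, 0 < eps -> exists2 delta : R, 0 < delta &
          forall w, Fvec F w -> (forall j, `|w 0 j - v 0 j| < delta) ->
            forall j, `|f w 0 j - f v 0 j| < eps)
    & exists Sigma, complete_Frational_fan F Sigma /\
        forall s, s \in Sigma -> exists A : 'M[R]_r, (forall i j, A i j \in F) /\
          forall v, Fvec F v -> cone_of s v -> f v = v *m A].

(* a polyptych lattice of rank r over F, with (nonempty) index type I,
   charts M_alpha = F^r and mutations mu alpha beta : M_alpha -> M_beta *)
Definition is_polyptych (R : realType) (F : {pred R}) (I : Type) (r : nat)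
    (mu : I -> I -> 'rV[R]_r -> 'rV[R]_r) : Prop :=
  [/\ inhabited I,
      (forall a b, piecewise_Flinear F (mu a b)),
      (forall a v, Fvec F v -> mu a a v = v),
      (forall a b v, Fvec F v -> mu b a (mu a b v) = v)
    & (forall a b c v, Fvec F v -> mu b c (mu a b v) = mu a c v)].

(* An element of the polyptych lattice
   is a class [(alpha, v)] of the disjoint union; a function on the set of
   elements is represented by f : I -> V -> R with f alpha v = value at
   [(alpha, v)], required to be constant on classes. *)

Definition is_mfun (R : realType) (I : Type) (V : lmodType R) (FV : V -> Prop)
    (mu : I -> I -> V -> V) (f : I -> V -> R) : Prop :=
  forall a b v, FV v -> f b (mu a b v) = f a v.

(* [(b,v)] +_a [(c,w)] = [(a, mu b a v + mu c a w)];
   lam [(a,v)] = [(a, lam v)] *)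
Definition is_point (R : realType) (F : {pred R}) (I : Type) (V : lmodType R)
    (FV : V -> Prop) (mu : I -> I -> V -> V) (f : I -> V -> R) : Prop :=
  [/\ is_mfun FV mu f,
      (forall a v, FV v -> f a v \in F),
      (forall b v c w, FV v -> FV w ->
          (forall a, f b v + f c w <= f a (mu b a v + mu c a w)) /\
          (exists a, f b v + f c w = f a (mu b a v + mu c a w)))
    & (forall lam a v, lam \in F -> 0 <= lam -> FV v -> f a (lam *: v) = lam * f a v)].

(* Sp(M, alpha): p o pi_alpha^{-1} is F-linear on M_alpha *)
Definition is_point_in (R : realType) (F : {pred R}) (I : Type) (V : lmodType R)
    (FV : V -> Prop) (mu : I -> I -> V -> V) (f : I -> V -> R) (a : I) : Prop :=
  [/\ is_point F FV mu f,
      (forall v w, FV v -> FV w -> f a (v + w) = f a v + f a w)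
    & (forall lam v, lam \in F -> FV v -> f a (lam *: v) = lam * f a v)].

Definition same_fun (R : realType) (I : Type) (V : lmodType R) (FV : V -> Prop)
    (f g : I -> V -> R) : Prop :=
  forall a v, FV v -> f a v = g a v.

Definition prod_FV (R : realType) (F : {pred R}) (r r' : nat)
    (x : ('rV[R]_r * 'rV[R]_r')%type) : Prop :=
  Fvec F x.1 /\ Fvec F x.2.

Definition prod_mu (R : realType) (I I' : Type) (r r' : nat)
    (mu : I -> I -> 'rV[R]_r -> 'rV[R]_r) (mu' : I' -> I' -> 'rV[R]_r' -> 'rV[R]_r')
    (a b : (I * I')%type) (x : ('rV[R]_r * 'rV[R]_r')%type) : ('rV[R]_r * 'rV[R]_r')%type :=
  (mu a.1 b.1 x.1, mu' a.2 b.2 x.2).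

(* (p, p') |-> p o pr + p' o pr'  where pr [((a,a'),(v,v'))] = [(a,v)] *)
Definition sum_pr (R : realType) (I I' : Type) (r r' : nat)
    (p : I -> 'rV[R]_r -> R) (p' : I' -> 'rV[R]_r' -> R)
    (a : (I * I')%type) (x : ('rV[R]_r * 'rV[R]_r')%type) : R :=
  p a.1 x.1 + p' a.2 x.2.

(* Main.v *)
Require Import Defs.
From HB Require Import structures.
From mathcomp Require Import all_boot all_order all_algebra.
From mathcomp Require Import reals.
Import Order.TTheory GRing.Theory Num.Theory.
Local Open Scope ring_scope.

Set Implicit Arguments. Unset Strict Implicit.

Lemma F0 (R : realType) (F : {pred R}) (HF : subring_closed F) : 0 \in F.
Proof. case: HF => H1 Hs _. by rewrite -(subrr 1) Hs. Qed.

Lemma FD (R : realType) (F : {pred R}) (HF : subring_closed F) x y :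
  x \in F -> y \in F -> x + y \in F.
Proof.
move=> hx hy; case: HF => H1 Hs _.
have h0 : 0 \in F by rewrite -(subrr 1) Hs.
have := Hs x (0 - y) hx (Hs 0 y h0 hy). by rewrite sub0r opprK.
Qed.

Lemma Fvec0 (R : realType) (F : {pred R}) (HF : subring_closed F) r :
  Fvec F (0 : 'rV[R]_r).
Proof. by move=> j; rewrite mxE (F0 HF). Qed.

Lemma FvecD (R : realType) (F : {pred R}) (HF : subring_closed F) r (v w : 'rV[R]_r) :
  Fvec F v -> Fvec F w -> Fvec F (v + w).
Proof. by move=> hv hw j; rewrite mxE FD. Qed.

Lemma mu0 (R : realType) (F : {pred R}) (HF : subring_closed F) (I : Type) r
  (mu : I -> I -> 'rV[R]_r -> 'rV[R]_r) : is_polyptych F mu -> forall a b, mu a b 0 = 0.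
Proof.
case=> _ Hpw _ _ _ a b.
case: (Hpw a b) => _ _ [Sigma [[_ _ _ _ Hcov] HA]].
case: (Hcov 0) => s hs hc.
case: (HA s hs) => A [_ HA']. rewrite HA' ?mul0mx //; exact: Fvec0.
Qed.

Lemma muF (R : realType) (F : {pred R}) (I : Type) r
  (mu : I -> I -> 'rV[R]_r -> 'rV[R]_r) : is_polyptych F mu -> forall a b v, Fvec F v -> Fvec F (mu a b v).
Proof. case=> _ Hpw _ _ _ a b. by case: (Hpw a b). Qed.

Lemma point0 (R : realType) (F : {pred R}) (HF : subring_closed F) (I : Type) (V : lmodType R)
    (FV : V -> Prop) (mu : I -> I -> V -> V) (f : I -> V -> R) :
  is_point F FV mu f -> FV 0 -> forall a, f a 0 = 0.
Proof.
case=> _ _ _ Hs h0 a. have := Hs 0 a 0 (F0 HF) (lexx _) h0. by rewrite scale0r mul0r.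
Qed.

Lemma pairD (R : realType) r r' (v w : 'rV[R]_r) (v' w' : 'rV[R]_r') :
 ((v,v') + (w,w') = (v+w, v'+w')). Proof. reflexivity. Qed.
Lemma pairZ (R : realType) r r' (v : 'rV[R]_r) (v' : 'rV[R]_r') (l : R):
 (l *: (v,v') = (l *: v, l *: v')). Proof. reflexivity. Qed.

Section S.
Variables (R : realType) (F : {pred R}) (HF : subring_closed F)
    (I I' : finType) (r r' : nat)
    (mu : I -> I -> 'rV[R]_r -> 'rV[R]_r) (mu' : I' -> I' -> 'rV[R]_r' -> 'rV[R]_r')
    (HM : is_polyptych F mu) (HM' : is_polyptych F mu').

Lemma part1 p p' : is_point F (@Fvec R F r) mu p -> is_point F (@Fvec R F r') mu' p' ->
         is_point F (@prod_FV R F r r') (prod_mu mu mu') (sum_pr p p').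
Proof.
case=> m1 f1 d1 s1 [m2 f2 d2 s2]; rewrite /prod_FV; split.
- move=> [a a'] [b b'] [v v'] [hv hv']; rewrite /sum_pr /prod_mu /=.
  by rewrite m1 // m2.
- move=> [a a'] [v v'] [hv hv']; rewrite /sum_pr /=; apply: (FD HF); [exact: f1 | exact: f2].
- move=> [b b'] [v v'] [c c'] [w w'] [hv hv'] [hw hw']; rewrite /sum_pr /prod_mu /=.
  have [l1 [a1 e1]] := d1 b v c w hv hw.
  have [l2 [a2 e2]] := d2 b' v' c' w' hv' hw'.
  split.
  + move=> [a a'] /=.
    rewrite addrACA; exact: lerD.
  + exists (a1, a2) => /=. by rewrite addrACA e1 e2.
- move=> lam [a a'] [v v'] hl hl0 [hv hv']; rewrite /sum_pr /=.
  by rewrite s1 // s2 // mulrDr.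
Qed.

Lemma I'inh : inhabited I'. Proof. by case: HM'. Qed.
Lemma Iinh : inhabited I. Proof. by case: HM. Qed.

Lemma part2 p p' q q' :
         is_point F (@Fvec R F r) mu p -> is_point F (@Fvec R F r') mu' p' ->
         is_point F (@Fvec R F r) mu q -> is_point F (@Fvec R F r') mu' q' ->
         same_fun (@prod_FV R F r r') (sum_pr p p') (sum_pr q q') ->
         same_fun (@Fvec R F r) p q /\ same_fun (@Fvec R F r') p' q'.
Proof.
move=> Pp Pp' Pq Pq'; rewrite /same_fun /prod_FV => E.
have Z := Fvec0 HF.
case: I'inh => a0'; case: Iinh => a0.
split.
- move=> a v hv. have := E (a, a0') (v, 0) (conj hv (Z _)).
  rewrite /sum_pr /= (point0 HF Pp') ?(point0 HF Pq') // !addr0 //.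
- move=> a v hv. have := E (a0, a) (0, v) (conj (Z _) hv).
  rewrite /sum_pr /= (point0 HF Pp) ?(point0 HF Pq) // !add0r //.
Qed.

Lemma part4 (a : I) (a' : I') p p' :
         is_point_in F (@Fvec R F r) mu p a -> is_point_in F (@Fvec R F r') mu' p' a' ->
         is_point_in F (@prod_FV R F r r') (prod_mu mu mu') (sum_pr p p') (a, a').
Proof.
case=> P1 a1 s1 [P2 a2 s2]; split; rewrite /prod_FV.
- exact: part1.
- move=> [v v'] [w w'] [hv hv'] [hw hw']; rewrite /sum_pr /=.
  by rewrite a1 // a2 // addrACA.
- move=> lam [v v'] hl [hv hv']; rewrite /sum_pr /=.
  by rewrite s1 // s2 // mulrDr.
Qed.


Lemma muid : forall a v, Fvec F v -> mu a a v = v. Proof. by case: HM. Qed.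
Lemma muid' : forall a v, Fvec F v -> mu' a a v = v. Proof. by case: HM'. Qed.

Lemma part3 P : is_point F (@prod_FV R F r r') (prod_mu mu mu') P ->
         exists p, exists p',
           [/\ is_point F (@Fvec R F r) mu p, is_point F (@Fvec R F r') mu' p'
             & same_fun (@prod_FV R F r r') P (sum_pr p p')].
Proof.
case=> m f d s.
have Z := Fvec0 HF.
have Z0 := mu0 HF HM; have Z0' := mu0 HF HM'.
case: I'inh => a0'; case: Iinh => a0.
exists (fun a v => P (a, a0') (v, 0)), (fun a v => P (a0, a) (0, v)); split.
- split.
  + move=> a b v hv /=.
    have := m (a, a0') (b, a0') (v, 0) (conj hv (Z _)).
    by rewrite /prod_mu /= ?Z0 ?Z0'.
  + move=> a v hv /=; exact: f (a, a0') (v, 0) (conj hv (Z _)).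
  + move=> b v c w hv hw /=.
    have [d1 [[x1 x2] e]] := d (b, a0') (v, 0) (c, a0') (w, 0) (conj hv (Z _)) (conj hw (Z _)).
    split.
    * move=> a. have := d1 (a, a0'). by rewrite /prod_mu /= pairD ?Z0 ?Z0' addr0.
    * exists x1. rewrite e /prod_mu /= pairD ?Z0 ?Z0' addr0.
      have hX : Fvec F (mu b x1 v + mu c x1 w).
        by apply: (FvecD HF); apply: (muF HM).
      have := m (x1, a0') (x1, x2) (mu b x1 v + mu c x1 w, 0) (conj hX (Z _)).
      by rewrite /prod_mu /= ?Z0 ?Z0' muid.
  + move=> lam a v hl hl0 hv /=.
    have := s lam (a, a0') (v, 0) hl hl0 (conj hv (Z _)).
    by rewrite pairZ scaler0.
- split.
  + move=> a b v hv /=.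
    have := m (a0, a) (a0, b) (0, v) (conj (Z _) hv).
    by rewrite /prod_mu /= ?Z0 ?Z0'.
  + move=> a v hv /=; exact: f (a0, a) (0, v) (conj (Z _) hv).
  + move=> b v c w hv hw /=.
    have [d1 [[x1 x2] e]] := d (a0, b) (0, v) (a0, c) (0, w) (conj (Z _) hv) (conj (Z _) hw).
    split.
    * move=> a. have := d1 (a0, a). by rewrite /prod_mu /= pairD ?Z0 ?Z0' addr0.
    * exists x2. rewrite e /prod_mu /= pairD ?Z0 ?Z0' addr0.
      have hX : Fvec F (mu' b x2 v + mu' c x2 w).
        by apply: (FvecD HF); apply: (muF HM').
      have := m (a0, x2) (x1, x2) (0, mu' b x2 v + mu' c x2 w) (conj (Z _) hX).
      by rewrite /prod_mu /= ?Z0 ?Z0' muid'.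
  + move=> lam a v hl hl0 hv /=.
    have := s lam (a0, a) (0, v) hl hl0 (conj (Z _) hv).
    by rewrite pairZ scaler0.
- move=> [a a'] [v v'] [hv hv']; rewrite /sum_pr /=.
  have [_ [[x1 x2] e]] := d (a, a0') (v, 0) (a0, a') (0, v') (conj hv (Z _)) (conj (Z _) hv').
  rewrite e /prod_mu /= pairD ?Z0 ?Z0' addr0 add0r.
  have := m (a, a') (x1, x2) (v, v') (conj hv hv').
  by rewrite /prod_mu /=.
Qed.

End S.

Theorem mainTheorem5 (R : realType) (F : {pred R}) (HF : subring_closed F)
    (I I' : finType) (r r' : nat)
    (mu : I -> I -> 'rV[R]_r -> 'rV[R]_r) (mu' : I' -> I' -> 'rV[R]_r' -> 'rV[R]_r')
    (HM : is_polyptych F mu) (HM' : is_polyptych F mu') :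
  [/\ (* the map lands in Sp(M x M') *)
      (forall p p', is_point F (@Fvec R F r) mu p -> is_point F (@Fvec R F r') mu' p' ->
         is_point F (@prod_FV R F r r') (prod_mu mu mu') (sum_pr p p')),
      (* injective *)
      (forall p p' q q',
         is_point F (@Fvec R F r) mu p -> is_point F (@Fvec R F r') mu' p' ->
         is_point F (@Fvec R F r) mu q -> is_point F (@Fvec R F r') mu' q' ->
         same_fun (@prod_FV R F r r') (sum_pr p p') (sum_pr q q') ->
         same_fun (@Fvec R F r) p q /\ same_fun (@Fvec R F r') p' q'),
      (* surjective *)
      (forall P, is_point F (@prod_FV R F r r') (prod_mu mu mu') P ->
         exists p, exists p',
           [/\ is_point F (@Fvec R F r) mu p, is_point F (@Fvec R F r') mu' p'
             & same_fun (@prod_FV R F r r') P (sum_pr p p')])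
    & (* maps Sp(M,a) x Sp(M',a') into Sp(M x M',(a,a')) *)
      (forall (a : I) (a' : I') p p',
         is_point_in F (@Fvec R F r) mu p a -> is_point_in F (@Fvec R F r') mu' p' a' ->
         is_point_in F (@prod_FV R F r r') (prod_mu mu mu') (sum_pr p p') (a, a'))].
Proof.
Proof.
split.
- exact: part1.
- exact: (part2 HF HM HM').
- exact: (part3 HF HM HM').
- exact: part4.
Qed.
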